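(* Let $\boldsymbol{\mathcal{D}} = \begin{pmatrix}\boldsymbol{W}_p\\ \boldsymbol{U}_f \\ \boldsymbol{Y}_f\end{pmatrix}$ be a data matrix with full row rank and LQ decomposition as described in the context, let $\boldsymbol{Z}:=\begin{pmatrix}\boldsymbol{W}_p\\ \boldsymbol{U}_f\end{pmatrix}$, $\boldsymbol{\Pi}:=\boldsymbol{Z}^+\boldsymbol{Z}$, $\boldsymbol{\Pi}_\perp:=\boldsymbol{I}-\boldsymbol{\Pi}$, and $\lambda_a>0$. Then $\boldsymbol{\gamma}$-DDPC with regularization $\tilde h(\boldsymbol{\gamma}) = \lambda_a \|\boldsymbol{\gamma}_2\|_2^2$ and the additional constraint $\boldsymbol{\gamma}_3 = \boldsymbol{0}$ is equivalent to DeePC with regularization $h(\boldsymbol{a}) = \lambda_a \|\boldsymbol{\Pi}\boldsymbol{a}\|_2^2$ (or, alternatively, $h(\boldsymbol{a}) = \lambda_a \|\boldsymbol{a}\|_2^2$) and the additional constraint $\boldsymbol{\Pi}_\perp \boldsymbol{a} = \boldsymbol{0}$. Furthermore, both schemes are equivalent to SPC with the additional regularization $h^\ast(\boldsymbol{\xi}, \mathbf{u}_f, \mathbf{y}_f) = \lambda_a \|\mathbf{u}_f-\boldsymbol{U}_f \boldsymbol{W}_p^+\boldsymbol{\xi}\|_{\boldsymbol{\mathcal{R}}_\text{reg}}^2$, where $\boldsymbol{\mathcal{R}}_\text{reg} :=\left(\boldsymbol{U}_f\left(\boldsymbol{I}-\boldsymbol{W}_p^+\boldsymbol{W}_p\r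ight)\boldsymbol{U}_f^\top\right)^{-1}$.
   Context: $\boldsymbol{M}^+$ denotes the Moore–Penrose pseudoinverse and $\|\boldsymbol{x}\|_{\boldsymbol{M}}^2 := \boldsymbol{x}^\top\boldsymbol{M}\boldsymbol{x}$. Data: $m$ inputs, $p$ outputs, past horizon $N_p$, future horizon $N_f$, $L=N_p+N_f$, and $\ell$ data trajectories. The data matrix $\boldsymbol{\mathcal{D}}\in\mathbb{R}^{L(m+p)\times\ell}$ has blocks $\boldsymbol{W}_p\in\mathbb{R}^{N_p(m+p)\times\ell}$ (past inputs and outputs), $\boldsymbol{U}_f\in\mathbb{R}^{mN_f\times \ell}$, $\boldsymbol{Y}_f\in\mathbb{R}^{pN_f\times\ell}$ and is assumed to have full row rank. Its LQ decomposition is $\boldsymbol{\mathcal{D}} = \begin{pmatrix} \boldsymbol{L}_{11} & \boldsymbol{0} & \boldsymbol{0} & \boldsymbol{0} \\ \boldsymbol{L}_{21} & \boldsymbol{L}_{22} & \boldsymbol{0} & \boldsymbol{0} \\ \boldsymbol{L}_{31} & \boldsymbol{L}_{32} & \boldsymbol{L}_{33} & \boldsymbol{0} \end{pmatrix}\begin{pmatrix}\boldsymbol{Q}_1\\ \boldsymbol{Q}_2\\ \boldsymbol{Q}_3\\ \boldsymbol{Q}_4\end{pmatrix}$, with non-singular square diagonal blocks $\boldsymbol{L}_{11},\boldsymbol{L}_{22},\boldsymbol{L}_{33}$ (of sizes matching $\boldsymbol{W}_p,\boldsymbol{U}_f,\boldsymbol{Y}_f$) and $\boldsymbol{Q}=\begin{pmatrix}\boldsymbol{Q}_1^\top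 & \boldsymbol{Q}_2^\top&\boldsymbol{Q}_3^\top&\boldsymbol{Q}_4^\top\end{pmatrix}^\top\in\mathbb{R}^{\ell\times\ell}$ orthogonal; $\boldsymbol{\gamma}_i := \boldsymbol{Q}_i\boldsymbol{a}$. Given current past I/O data $\boldsymbol{\xi}\in\mathbb{R}^{N_p(m+p)}$, a cost $J(\boldsymbol{\xi},\mathbf{u}_f,\mathbf{y}_f)$ and constraint sets $\mathcal{U}$, $\mathcal{Y}$: DeePC with regularization $h$ is the problem $\min_{\mathbf{u}_f,\mathbf{y}_f,\boldsymbol{a}} J(\boldsymbol{\xi},\mathbf{u}_f,\mathbf{y}_f)+h(\boldsymbol{a})$ s.t. $(\boldsymbol{\xi};\mathbf{u}_f;\mathbf{y}_f)=\boldsymbol{\mathcal{D}}\boldsymbol{a}$, $(\mathbf{u}_f,\mathbf{y}_f)\in\mathcal{U}\times\mathcal{Y}$ (plus any stated additional constraint on $\boldsymbol{a}$). $\boldsymbol{\gamma}$-DDPC with regularization $\tilde h$ is the problem $\min_{\mathbf{u}_f,\mathbf{y}_f,\boldsymbol{\gamma}_2,\boldsymbol{\gamma}_3} J(\boldsymbol{\xi},\mathbf{u}_f,\mathbf{y}_f)+\tilde h(\boldsymbol{\gamma})$ s.t. $\boldsymbol{\gamma}_1=\boldsymbol{L}_{11}^{-1}\boldsymbol{\xi}$, $\mathbf{u}_f = \boldsymbol{L}_{21}\boldsymbol{\gamma}_1+\boldsymbol{L}_{22}\boldsymbol{\gamma}_2$, $\mathbf{y}_f=\boldsymbol{L}_{31}\boldsymbol{\gamma}_1+\boldsymbol{L}_{32}\boldsymbol{\gamma}_2+\boldsymbol{L}_{33}\boldsymbol{\gamma}_3$,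 $(\mathbf{u}_f,\mathbf{y}_f)\in\mathcal{U}\times\mathcal{Y}$ (i.e., $\boldsymbol{\gamma}_4=\boldsymbol{0}$ is fixed), plus any stated additional constraint on the $\boldsymbol{\gamma}_i$. SPC with additional regularization $h^\ast$ is the problem $\min_{\mathbf{u}_f,\mathbf{y}_f} J(\boldsymbol{\xi},\mathbf{u}_f,\mathbf{y}_f)+h^\ast(\boldsymbol{\xi},\mathbf{u}_f,\mathbf{y}_f)$ s.t. $\mathbf{y}_f = \boldsymbol{K}_{\text{SPC}}\begin{pmatrix}\boldsymbol{\xi}\\ \mathbf{u}_f\end{pmatrix}$, $(\mathbf{u}_f,\mathbf{y}_f)\in\mathcal{U}\times\mathcal{Y}$, where $\boldsymbol{K}_{\text{SPC}} := \boldsymbol{Y}_f\boldsymbol{Z}^+$ (the minimizer of $\|\boldsymbol{Y}_f-\boldsymbol{K}\boldsymbol{Z}\|_F^2$). Two such optimal control problems are called equivalent if, for every $\boldsymbol{\xi}$, they yield the same optimal predicted input/output trajectories $(\mathbf{u}_f^\ast,\mathbf{y}_f^\ast)$ (not necessarily the same optimal cost). *)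

(* Defs.v *)
From HB Require Import structures.
From mathcomp Require Import all_boot all_order all_algebra.
Set Implicit Arguments. Unset Strict Implicit. Unset Printing Implicit Defensive.
Import Order.TTheory GRing.Theory Num.Theory.
Local Open Scope ring_scope.

Section Defs.
Variable R : realFieldType.

Definition is_MP_pinv (r c : nat) (A : 'M[R]_(r, c)) (X : 'M[R]_(c, r)) : Prop :=
  [/\ A *m X *m A = A, X *m A *m X = X,
      (A *m X)^T = A *m X & (X *m A)^T = X *m A].

Definition wsqnorm (n : nat) (M : 'M[R]_n) (x : 'cV[R]_n) : R :=
  (x^T *m M *m x) ord0 ord0.
Definition sqnorm (n : nat) (x : 'cV[R]_n) : R := (x^T *m x) ord0 ord0.

Definition opt_io (nu ny : nat) (X : Type) (feas : X -> Prop) (cost : X -> R)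
  (io : X -> 'cV[R]_nu * 'cV[R]_ny) (u : 'cV[R]_nu) (y : 'cV[R]_ny) : Prop :=
  exists x, (feas x /\ forall z, feas z -> cost x <= cost z) /\ io x = (u, y).

(* Two problems are equivalent: same optimal (u_f^opt, y_f^opt) for every xi. *)
Definition equiv_ocp (np nu ny : nat)
  (P1 P2 : 'cV[R]_np -> 'cV[R]_nu -> 'cV[R]_ny -> Prop) : Prop :=
  forall xi u y, P1 xi u y <-> P2 xi u y.

Section Problems.
Variables (np nu ny ell k : nat).
Variable J : 'cV[R]_np -> 'cV[R]_nu -> 'cV[R]_ny -> R.
Variables (Uc : 'cV[R]_nu -> Prop) (Yc : 'cV[R]_ny -> Prop).

(* DeePC with regularization h and additional constraint `extra` on a.
   Decision variable: (u_f, y_f, a). *)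
Definition DeePC (Wp : 'M[R]_(np, ell)) (Uf : 'M[R]_(nu, ell)) (Yf : 'M[R]_(ny, ell))
  (h : 'cV[R]_ell -> R) (extra : 'cV[R]_ell -> Prop)
  (xi : 'cV[R]_np) (u : 'cV[R]_nu) (y : 'cV[R]_ny) : Prop :=
  opt_io
    (fun x : 'cV[R]_nu * 'cV[R]_ny * 'cV[R]_ell =>
       [/\ col_mx xi (col_mx x.1.1 x.1.2) = col_mx Wp (col_mx Uf Yf) *m x.2,
           Uc x.1.1, Yc x.1.2 & extra x.2])
    (fun x => J xi x.1.1 x.1.2 + h x.2)
    (fun x => (x.1.1, x.1.2)) u y.

(* gamma-DDPC with regularization htilde (a function of gamma_1..gamma_4,
   evaluated at gamma_4 = 0) and additional constraint `extra` on the gamma_i.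
   Decision variable: (u_f, y_f, gamma_2, gamma_3); gamma_1 = L11^-1 xi. *)
Definition gDDPC (L11 : 'M[R]_np) (L21 : 'M[R]_(nu, np)) (L22 : 'M[R]_nu)
  (L31 : 'M[R]_(ny, np)) (L32 : 'M[R]_(ny, nu)) (L33 : 'M[R]_ny)
  (htilde : 'cV[R]_np -> 'cV[R]_nu -> 'cV[R]_ny -> 'cV[R]_k -> R)
  (extra : 'cV[R]_np -> 'cV[R]_nu -> 'cV[R]_ny -> 'cV[R]_k -> Prop)
  (xi : 'cV[R]_np) (u : 'cV[R]_nu) (y : 'cV[R]_ny) : Prop :=
  let g1 := invmx L11 *m xi in
  opt_io
    (fun x : 'cV[R]_nu * 'cV[R]_ny * 'cV[R]_nu * 'cV[R]_ny =>
       [/\ x.1.1.1 = L21 *m g1 + L22 *m x.1.2,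
           x.1.1.2 = L31 *m g1 + L32 *m x.1.2 + L33 *m x.2,
           Uc x.1.1.1, Yc x.1.1.2 & extra g1 x.1.2 x.2 0])
    (fun x => J xi x.1.1.1 x.1.1.2 + htilde g1 x.1.2 x.2 0)
    (fun x => (x.1.1.1, x.1.1.2)) u y.

Definition SPC (K : 'M[R]_(ny, np + nu))
  (hstar : 'cV[R]_np -> 'cV[R]_nu -> 'cV[R]_ny -> R)
  (xi : 'cV[R]_np) (u : 'cV[R]_nu) (y : 'cV[R]_ny) : Prop :=
  opt_io
    (fun x : 'cV[R]_nu * 'cV[R]_ny =>
       [/\ x.2 = K *m col_mx xi x.1, Uc x.1 & Yc x.2])
    (fun x => J xi x.1 x.2 + hstar xi x.1 x.2)
    id u y.

Definition LQ_L (L11 : 'M[R]_np) (L21 : 'M[R]_(nu, np)) (L22 : 'M[R]_nu)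
  (L31 : 'M[R]_(ny, np)) (L32 : 'M[R]_(ny, nu)) (L33 : 'M[R]_ny)
  : 'M[R]_(np + (nu + ny), np + (nu + (ny + k))) :=
  col_mx (row_mx L11 0)
    (col_mx (row_mx L21 (row_mx L22 0))
            (row_mx L31 (row_mx L32 (row_mx L33 (0 : 'M[R]_(ny, k)))))).

End Problems.
End Defs.

(* Main.v *)
Require Import Defs.
From HB Require Import structures.
From mathcomp Require Import all_boot all_order all_algebra.
Import Order.TTheory GRing.Theory Num.Theory.
Local Open Scope ring_scope.


Lemma opt_io_transfer (R : realFieldType) (nu ny : nat) (X1 X2 : Type)
  (f1 : X1 -> Prop) (c1 : X1 -> R) (io1 : X1 -> 'cV[R]_nu * 'cV[R]_ny)
  (f2 : X2 -> Prop) (c2 : X2 -> R) (io2 : X2 -> 'cV[R]_nu * 'cV[R]_ny) (c : R) :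
  (forall x, f1 x -> exists z, [/\ f2 z, io2 z = io1 x & c2 z = c1 x + c]) ->
  (forall z, f2 z -> exists x, [/\ f1 x, io1 x = io2 z & c2 z = c1 x + c]) ->
  forall u y, opt_io f1 c1 io1 u y <-> opt_io f2 c2 io2 u y.
Proof.
move=> H12 H21 u y; split.
- case=> x [[fx opt] iox]; have [z [fz ioz cz]] := H12 x fx.
  exists z; split; last by rewrite ioz.
  split=> // z' fz'; have [x' [fx' _ cz']] := H21 z' fz'.
  by rewrite cz cz' lerD2r opt.
- case=> z [[fz opt] ioz]; have [x [fx iox cz]] := H21 z fz.
  exists x; split; last by rewrite iox.
  split=> // x' fx'; have [z' [fz' _ cz']] := H12 x' fx'.
  by rewrite -(lerD2r c) -cz -cz' opt.
Qed.

Lemma trD (R : realFieldType) (n1 n2 : nat) (A B : 'M[R]_(n1, n2)) : (A + B)^T = A^T + B^T.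
Proof. by apply/matrixP => i j; rewrite !mxE. Qed.

Lemma trB (R : realFieldType) (n1 n2 : nat) (A B : 'M[R]_(n1, n2)) : (A - B)^T = A^T - B^T.
Proof. by apply/matrixP => i j; rewrite !mxE. Qed.

Theorem proposition6 (R : realFieldType) (m p Np Nf ell k : nat)
  (Wp : 'M[R]_(Np * (m + p), ell)) (Uf : 'M[R]_(m * Nf, ell))
  (Yf : 'M[R]_(p * Nf, ell))
  (L11 : 'M[R]_(Np * (m + p))) (L21 : 'M[R]_(m * Nf, Np * (m + p)))
  (L22 : 'M[R]_(m * Nf)) (L31 : 'M[R]_(p * Nf, Np * (m + p)))
  (L32 : 'M[R]_(p * Nf, m * Nf)) (L33 : 'M[R]_(p * Nf))
  (Q1 : 'M[R]_(Np * (m + p), ell)) (Q2 : 'M[R]_(m * Nf, ell))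
  (Q3 : 'M[R]_(p * Nf, ell)) (Q4 : 'M[R]_(k, ell))
  (Zpinv : 'M[R]_(ell, Np * (m + p) + m * Nf)) (Wppinv : 'M[R]_(ell, Np * (m + p)))
  (lambda_a : R)
  (J : 'cV[R]_(Np * (m + p)) -> 'cV[R]_(m * Nf) -> 'cV[R]_(p * Nf) -> R)
  (Uc : 'cV[R]_(m * Nf) -> Prop) (Yc : 'cV[R]_(p * Nf) -> Prop) :
  let D := col_mx Wp (col_mx Uf Yf) in
  let Q := col_mx Q1 (col_mx Q2 (col_mx Q3 Q4)) in
  row_free D ->
  L11 \in unitmx -> L22 \in unitmx -> L33 \in unitmx ->
  Q *m Q^T = 1%:M -> Q^T *m Q = 1%:M ->
  D = LQ_L k L11 L21 L22 L31 L32 L33 *m Q ->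
  let Z := col_mx Wp Uf in
  is_MP_pinv Z Zpinv -> is_MP_pinv Wp Wppinv ->
  0 < lambda_a ->
  let Pi := Zpinv *m Z in
  let Pi_perp := 1%:M - Pi in
  let K_SPC := Yf *m Zpinv in
  let R_reg := invmx (Uf *m (1%:M - Wppinv *m Wp) *m Uf^T) in
  let gamma_DDPC :=
    gDDPC J Uc Yc L11 L21 L22 L31 L32 L33
      (fun g1 g2 g3 (g4 : 'cV[R]_k) => lambda_a * sqnorm g2)
      (fun g1 g2 g3 (g4 : 'cV[R]_k) => g3 = 0) in
  equiv_ocp gamma_DDPC
    (DeePC J Uc Yc Wp Uf Yf (fun a => lambda_a * sqnorm (Pi *m a))
       (fun a => Pi_perp *m a = 0))
  /\ equiv_ocp gamma_DDPC
    (DeePC J Uc Yc Wp Uf Yf (fun a => lambda_a * sqnorm a)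
       (fun a => Pi_perp *m a = 0))
  /\ equiv_ocp gamma_DDPC
    (SPC J Uc Yc K_SPC
       (fun xi u y => lambda_a * wsqnorm R_reg (u - Uf *m Wppinv *m xi))).
Proof.
move=> D Q rfD uL11 uL22 uL33 QQt QtQ HD Z HZ HW lam_pos Pi Pi_perp K Rreg gD.
have [EWp EUf EYf] : [/\ Wp = L11 *m Q1, Uf = L21 *m Q1 + L22 *m Q2
   & Yf = L31 *m Q1 + L32 *m Q2 + L33 *m Q3].
  move: HD; rewrite /D /Q /LQ_L !mul_col_mx !mul_row_col !mul0mx !addr0.
  by move=> /eq_col_mx [-> /eq_col_mx [-> ->]]; rewrite addrA.
have [[O11 O12 O13] [[O21 O22 O23] [O31 O32]]] : [/\ Q1 *m Q1^T = 1%:M, Q1 *m Q2^T = 0 & Q1 *m Q3^T = 0]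
   /\ [/\ Q2 *m Q1^T = 0, Q2 *m Q2^T = 1%:M & Q2 *m Q3^T = 0] /\ (Q3 *m Q1^T = 0 /\ Q3 *m Q2^T = 0).
  have blk : forall (n1 n2 : nat) (A : 'M[R]_(n1, ell)) (B : 'M[R]_(n2, ell)),
      col_mx A B *m (col_mx A B)^T = 1%:M ->
      [/\ A *m A^T = 1%:M, A *m B^T = 0 & B *m B^T = 1%:M].
    move=> n1 n2 A B; rewrite tr_col_mx mul_col_row [1%:M]scalar_mx_block.
    by move=> /eq_block_mx [-> -> _ ->].
  have [O11 O1r Orr] := blk _ _ _ _ QQt.
  have [O22 O2r Orr'] := blk _ _ _ _ Orr.
  have [O33 O34 _] := blk _ _ _ _ Orr'.
  move: O1r O2r; rewrite !tr_col_mx !mul_mx_row => /eqP; rewrite !row_mx_eq0.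
  case/and3P=> /eqP O12 /eqP O13 _ /eqP; rewrite !row_mx_eq0 => /andP [/eqP O23 _].
  have tz : forall (n1 n2 : nat) (A : 'M[R]_(n1, ell)) (B : 'M[R]_(n2, ell)),
    A *m B^T = 0 -> B *m A^T = 0.
    by move=> n1 n2 A B H; have := congr1 trmx H; rewrite trmx_mul trmxK trmx0.
  split; first by split.
  by split; [split; rewrite // (tz _ _ _ _ O12) | rewrite (tz _ _ _ _ O13) (tz _ _ _ _ O23)].
have WQ1 : Wp *m Q1^T = L11 by rewrite EWp -mulmxA O11 mulmx1.
have WQ2 : Wp *m Q2^T = 0 by rewrite EWp -mulmxA O12 mulmx0.
have UQ1 : Uf *m Q1^T = L21.
  by rewrite EUf mulmxDl -!mulmxA O11 O21 mulmx1 mulmx0 addr0.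
have UQ2 : Uf *m Q2^T = L22.
  by rewrite EUf mulmxDl -!mulmxA O12 O22 mulmx1 mulmx0 add0r.
have YQ1 : Yf *m Q1^T = L31.
  by rewrite EYf !mulmxDl -!mulmxA O11 O21 O31 mulmx1 !mulmx0 !addr0.
have YQ2 : Yf *m Q2^T = L32.
  by rewrite EYf !mulmxDl -!mulmxA O12 O22 O32 mulmx1 !mulmx0 addr0 add0r.
have rng : forall (n : nat) (X : 'M[R]_(Np * (m + p), n)) (Y : 'M[R]_(m * Nf, n)),
  let a := Q1^T *m X + Q2^T *m Y in
  [/\ Wp *m a = L11 *m X, Uf *m a = L21 *m X + L22 *m Y, Yf *m a = L31 *m X + L32 *m Y,
     Q3 *m a = 0 & (Q1 *m a = X /\ Q2 *m a = Y)].
  move=> n X Y a; rewrite /a !mulmxDr !mulmxA WQ1 WQ2 UQ1 UQ2 YQ1 YQ2 O31 O32 O11 O12 O21 O22.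
  by rewrite !mul0mx !mul1mx !addr0 !add0r.
case: HZ => HZ1 HZ2 HZ3 HZ4; case: HW => HW1 HW2 HW3 HW4.
have ZG : Z *m row_mx (Q1^T *m invmx L11 + Q2^T *m (- (invmx L22 *m L21 *m invmx L11)))
                      (Q1^T *m 0 + Q2^T *m invmx L22) = 1%:M.
  have [w1 u1 _ _ _] := rng _ (invmx L11) (- (invmx L22 *m L21 *m invmx L11)).
  have [w2 u2 _ _ _] := rng _ (0 : 'M_(Np * (m + p), m * Nf)) (invmx L22).
  rewrite /Z mul_col_mx !mul_mx_row w1 u1 w2 u2 [1%:M]scalar_mx_block block_mxEv.
  rewrite !mulmx0 add0r mulmxV // mulmxN !mulmxA mulmxV // mul1mx subrr.
  done.
have ZZp : Z *m Zpinv = 1%:M.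
  by rewrite -[Z *m Zpinv]mulmx1 -{1}ZG !mulmxA HZ1 ZG.
have WWp : Wp *m Wppinv = 1%:M.
  have [w1 _ _ _ _] := rng _ (invmx L11) (0 : 'M_(m * Nf, Np * (m + p))).
  have WG : Wp *m (Q1^T *m invmx L11 + Q2^T *m 0) = 1%:M by rewrite w1 mulmxV.
  by rewrite -[Wp *m Wppinv]mulmx1 -{1}WG !mulmxA HW1 WG.
have Zrng : Zpinv = Q1^T *m (L11^T *m usubmx (Zpinv^T *m Zpinv) + L21^T *m dsubmx (Zpinv^T *m Zpinv))
                   + Q2^T *m (L22^T *m dsubmx (Zpinv^T *m Zpinv)).
  rewrite -{1}HZ2 -HZ4 trmx_mul -mulmxA -[Zpinv^T *m Zpinv]vsubmxK /Z tr_col_mx mul_row_col.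
  rewrite !col_mxKu !col_mxKd EWp EUf linearD /= !trmx_mul !mulmxDr !mulmxDl !mulmxA addrA.
  done.
have Wrng : Wppinv = Q1^T *m (L11^T *m (Wppinv^T *m Wppinv)) + Q2^T *m 0.
  by rewrite mulmx0 addr0 -{1}HW2 -HW4 trmx_mul -mulmxA EWp trmx_mul !mulmxA.

have PiZt : Pi *m Z^T = Z^T.
  by rewrite /Pi -[Zpinv *m Z]HZ4 -trmx_mul mulmxA HZ1.
have uL11t : L11^T \in unitmx by rewrite unitmx_tr.
have uL22t : L22^T \in unitmx by rewrite unitmx_tr.
have [PiW PiU] : Pi *m Wp^T = Wp^T /\ Pi *m Uf^T = Uf^T.
  by move: PiZt; rewrite /Z tr_col_mx mul_mx_row => /eq_row_mx.
have PiQ1 : Pi *m Q1^T = Q1^T.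
  have -> : Q1^T = Wp^T *m invmx L11^T by rewrite EWp trmx_mul mulmxK.
  by rewrite mulmxA PiW.
have PiQ2 : Pi *m Q2^T = Q2^T.
  have -> : Q2^T = (Uf^T - Q1^T *m L21^T) *m invmx L22^T.
    by rewrite EUf trD !trmx_mul addrAC subrr add0r mulmxK.
  by rewrite !mulmxA mulmxBr mulmxA PiU PiQ1.
have sqn : forall (c1 : 'cV[R]_(Np * (m + p))) (c2 : 'cV[R]_(m * Nf)),
    sqnorm (Q1^T *m c1 + Q2^T *m c2) = sqnorm c1 + sqnorm c2.
  move=> c1 c2; rewrite /sqnorm trD !trmx_mul !trmxK !mulmxDl !mulmxDr.
  rewrite -!mulmxA !(mulmxA Q1) !(mulmxA Q2) O11 O12 O21 O22 !mul1mx !mul0mx !mulmx0.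
  by rewrite !mxE !addr0 !add0r.
have PiR : forall (c1 : 'cV[R]_(Np * (m + p))) (c2 : 'cV[R]_(m * Nf)),
    Pi *m (Q1^T *m c1 + Q2^T *m c2) = Q1^T *m c1 + Q2^T *m c2.
  by move=> c1 c2; rewrite mulmxDr !mulmxA PiQ1 PiQ2.
have inR : forall a : 'cV[R]_ell, Pi *m a = a -> a = Q1^T *m (Q1 *m a) + Q2^T *m (Q2 *m a).
  move=> a Pa.
  have Ea : a = Q1^T *m ((L11^T *m usubmx (Zpinv^T *m Zpinv) + L21^T *m dsubmx (Zpinv^T *m Zpinv)) *m (Z *m a))
              + Q2^T *m ((L22^T *m dsubmx (Zpinv^T *m Zpinv)) *m (Z *m a)).
    by rewrite -{1}Pa /Pi -mulmxA {1}Zrng mulmxDl -!mulmxA.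
  move: Ea; set X := (_ *m (Z *m a)); set Y := (_ *m (Z *m a)) => Ea.
  by have [_ _ _ _ [Ha Hb]] := rng _ X Y; rewrite Ea Ha Hb.
have deepc : forall h : 'cV[R]_ell -> R, (forall a, Pi *m a = a -> h a = lambda_a * sqnorm a) ->
    equiv_ocp gD (DeePC J Uc Yc Wp Uf Yf h (fun a => Pi_perp *m a = 0)).
  move=> h Hh xi u y; rewrite /gD /gDDPC /DeePC.
  apply: (@opt_io_transfer R _ _ _ _ _ _ _ _ _ _ (lambda_a * sqnorm (invmx L11 *m xi))).
  - case=> [[[u' y'] g2] g3] /= [Eu Ey Hu Hy g30].
    exists (u', y', Q1^T *m (invmx L11 *m xi) + Q2^T *m g2).
    have [w1 u1 y1 q3 _] := rng _ (invmx L11 *m xi) g2.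
    split => //=.
      split => //.
        by rewrite !mul_col_mx w1 u1 y1 Eu Ey g30 mulmx0 addr0 mulKVmx.
      by rewrite /Pi_perp mulmxBl mul1mx PiR subrr.
    by rewrite Hh ?PiR // sqn mulrDr addrA addrAC.
  - case=> [[u' y'] a] /= [Ea Hu Hy Pa].
    have Pa' : Pi *m a = a.
      by move: Pa; rewrite /Pi_perp mulmxBl mul1mx => /eqP; rewrite subr_eq0 => /eqP.
    move: Ea; rewrite !mul_col_mx => /eq_col_mx [Exi /eq_col_mx [Eu Ey]].
    have Ea := inR a Pa'.
    have g1E : Q1 *m a = invmx L11 *m xi by rewrite Exi EWp -mulmxA mulKmx.
    have Q3a : Q3 *m a = 0.
      by rewrite {1}Ea; have [_ _ _ -> _] := rng _ (Q1 *m a) (Q2 *m a).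
    exists (u', y', Q2 *m a, 0); split => //=.
      split => //.
        by rewrite Eu EUf mulmxDl -!mulmxA g1E.
      by rewrite Ey EYf !mulmxDl -!mulmxA g1E Q3a mulmx0.
    by rewrite Hh // {1}Ea sqn g1E mulrDr addrA addrAC.
split; first by apply: deepc => a Pa; rewrite Pa.
split; first by apply: deepc.
have KE : forall (xi : 'cV[R]_(Np * (m + p))) (u : 'cV[R]_(m * Nf)), K *m col_mx xi u =
    L31 *m (invmx L11 *m xi) + L32 *m (invmx L22 *m (u - L21 *m (invmx L11 *m xi))).
  move=> xi u; set v := col_mx xi u.
  set X := (L11^T *m usubmx (Zpinv^T *m Zpinv) + L21^T *m dsubmx (Zpinv^T *m Zpinv)) *m v.
  set Y := (L22^T *m dsubmx (Zpinv^T *m Zpinv)) *m v.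
  have Ev : Zpinv *m v = Q1^T *m X + Q2^T *m Y.
    by rewrite {1}Zrng mulmxDl /X /Y !mulmxA.
  have [w1 u1 y1 _ _] := rng _ X Y.
  have := ZZp; move/(congr1 (mulmx^~ v)); rewrite mul1mx -mulmxA Ev /Z mul_col_mx w1 u1.
  move=> /eq_col_mx [EX EY].
  have EXv : X = invmx L11 *m xi by rewrite -EX mulKmx.
  have EYv : Y = invmx L22 *m (u - L21 *m (invmx L11 *m xi)).
    by rewrite -EX mulKmx // -[u]EY [L21 *m X + _]addrC addrK mulKmx.
  by rewrite /K -mulmxA Ev y1 EXv EYv.
have XWE : L11^T *m (Wppinv^T *m Wppinv) = invmx L11.
  have [w1 _ _ _ _] := rng _ (L11^T *m (Wppinv^T *m Wppinv)) 0.
  move: WWp; rewrite {1}Wrng w1 => H.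
  by rewrite -[LHS](mulKmx uL11) H mulmx1.
have UW : Uf *m Wppinv = L21 *m invmx L11.
  have [_ u1 _ _ _] := rng _ (L11^T *m (Wppinv^T *m Wppinv)) 0.
  by rewrite Wrng u1 mulmx0 addr0 XWE.
have WW : Wppinv *m Wp = Q1^T *m Q1.
  by rewrite Wrng mulmx0 addr0 XWE EWp -mulmxA (mulmxA (invmx L11)) mulVmx // mul1mx.
have RE : Rreg = invmx (L22 *m L22^T).
  rewrite /Rreg WW mulmxBr mulmx1 mulmxA UQ1 {1}EUf addrAC subrr add0r.
  by rewrite -mulmxA -[Q2 *m Uf^T]trmxK trmx_mul trmxK UQ2.
have wsq : forall g2 : 'cV[R]_(m * Nf), wsqnorm Rreg (L22 *m g2) = sqnorm g2.
  move=> g2; rewrite RE /wsqnorm /sqnorm.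
  have uM : L22 *m L22^T \in unitmx by rewrite unitmx_mul uL22 uL22t.
  have HX : L22^T *m invmx (L22 *m L22^T) *m L22 = 1%:M.
    have H1 : L22 *m (L22^T *m invmx (L22 *m L22^T) *m L22) = L22.
      by rewrite !mulmxA mulmxV // mul1mx.
    by rewrite -[LHS](mulKmx uL22) H1 mulVmx.
  by rewrite trmx_mul -!mulmxA (mulmxA L22^T) (mulmxA (L22^T *m _)) HX mul1mx.
move=> xi u y; rewrite /gD /gDDPC /SPC.
apply: (@opt_io_transfer R _ _ _ _ _ _ _ _ _ _ 0).
- case=> [[[u' y'] g2] g3] /= [Eu Ey Hu Hy g30].
  have E2 : u' - L21 *m (invmx L11 *m xi) = L22 *m g2 by rewrite Eu addrC addKr.
  exists (u', y'); split => //=.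
    by split => //; rewrite KE E2 mulKmx // Ey g30 mulmx0 addr0.
  by rewrite addr0 UW -mulmxA E2 wsq.
- case=> [u' y'] /= [Ey Hu Hy].
  set g2 := invmx L22 *m (u' - L21 *m (invmx L11 *m xi)).
  have E2 : u' - L21 *m (invmx L11 *m xi) = L22 *m g2 by rewrite /g2 mulKVmx.
  exists (u', y', g2, 0); split => //=.
    split => //.
      by rewrite -E2 addrC subrK.
    by rewrite mulmx0 addr0 Ey KE.
  by rewrite addr0 UW -mulmxA E2 wsq.
Qed.
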